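(* Let $X$ be a Hilbert space, $B$ a bounded self-adjoint operator on $X$ with $\rho(B)=\|B\|=1$ such that $-1$ is not an eigenvalue of $B$, and $f\in X$ such that $x=Bx+f$ is solvable. Fix $x_0\in X$, let $x_{n+1}=Bx_n+f$, and let $x_*$ be the solution with $Px_*=Px_0$, where $P$ is the orthogonal projection onto $\ker(I-B)$. Let $(f_n)\subset X$ satisfy $\|f_n-f\|\le\delta_n$ with $\delta_n\ge0$ and $(\delta_n)\in L$, and define $\tilde x_0=x_0$, $\tilde x_{n+1}=B\tilde x_n+f_n$. Put $\delta=\|(\delta_n)\|_L$. Then $\|\tilde x_n-x_*\|\le\|x_n-x_*\|+\|\sigma_n\|\,\delta$ for all $n$, and the approximations quasi-converge to $x_*$: for every $\varepsilon>0$ there is $N(\varepsilon)$ such that for all $N(\varepsilon)\le N_-<N_+$ there is $\eta>0$ such that $\|(\delta_n)\|_L<\eta$ implies $\|\tilde x_n-x_*\|<\varepsilon$ for all $n\in[N_-,N_+]$; i.e. $\lim_{n\to\infty,\ \|\sigma_n\|\delta\to0}\|\tilde x_n-x_*\|=0$.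
   Context: $L$ is a Banach space of real sequences $(a_k)_{k\ge0}$ with monotone norm (if $|a_k|\le|b_k|$ for all $k$ then $\|(a_k)\|_L\le\|(b_k)\|_L$), on which each linear functional $\sigma_n((a_k))=a_0+a_1+\dots+a_{n-1}$ ($\sigma_0=0$) is bounded; $\|\sigma_n\|$ denotes its norm as a functional on $L$. $I$ is the identity. *)

(* Defs.v *)
From Stdlib Require Import Reals Lra.
Open Scope R_scope.

Record RHilbert := {
  hcar :> Type;
  hzero : hcar;
  hadd : hcar -> hcar -> hcar;
  hopp : hcar -> hcar;
  hscal : R -> hcar -> hcar;
  hinner : hcar -> hcar -> R;
  haddA : forall x y z, hadd x (hadd y z) = hadd (hadd x y) z;
  haddC : forall x y, hadd x y = hadd y x;
  hadd0 : forall x, hadd x hzero = x;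
  haddN : forall x, hadd x (hopp x) = hzero;
  hscalA : forall a b x, hscal a (hscal b x) = hscal (a * b) x;
  hscal1 : forall x, hscal 1 x = x;
  hscalDr : forall a x y, hscal a (hadd x y) = hadd (hscal a x) (hscal a y);
  hscalDl : forall a b x, hscal (a + b) x = hadd (hscal a x) (hscal b x);
  hinnerC : forall x y, hinner x y = hinner y x;
  hinnerDl : forall x y z, hinner (hadd x y) z = hinner x z + hinner y z;
  hinnerZl : forall a x y, hinner (hscal a x) y = a * hinner x y;
  hinner_ge0 : forall x, 0 <= hinner x x;
  hinner_eq0 : forall x, hinner x x = 0 -> x = hzero;
  hcomplete : forall u : nat -> hcar,
    (forall eps, eps > 0 -> exists N, forall m n, (N <= m)%nat -> (N <= n)%nat ->
        sqrt (hinner (hadd (u m) (hopp (u n))) (hadd (u m) (hopp (u n)))) < eps) ->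
    exists l, forall eps, eps > 0 -> exists N, forall n, (N <= n)%nat ->
        sqrt (hinner (hadd (u n) (hopp l)) (hadd (u n) (hopp l))) < eps
}.

Arguments hzero {r}.
Arguments hadd {r}.
Arguments hopp {r}.
Arguments hscal {r}.
Arguments hinner {r}.

Definition hsub {X : RHilbert} (x y : X) : X := hadd x (hopp y).
Definition hnorm {X : RHilbert} (x : X) : R := sqrt (hinner x x).

Definition is_linear {X : RHilbert} (T : X -> X) : Prop :=
  (forall x y, T (hadd x y) = hadd (T x) (T y)) /\
  (forall a x, T (hscal a x) = hscal a (T x)).

Definition is_bounded {X : RHilbert} (T : X -> X) : Prop :=
  exists C, forall x, hnorm (T x) <= C * hnorm x.

Definition self_adjoint {X : RHilbert} (T : X -> X) : Prop :=
  forall x y, hinner (T x) y = hinner x (T y).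

Definition opnorm_is {X : RHilbert} (T : X -> X) (c : R) : Prop :=
  is_lub (fun r => exists x : X, hnorm x <= 1 /\ r = hnorm (T x)) c.

Definition in_spectrum {X : RHilbert} (T : X -> X) (lam : R) : Prop :=
  ~ (exists S : X -> X, is_linear S /\ is_bounded S /\
       (forall x, hsub (T (S x)) (hscal lam (S x)) = x) /\
       (forall x, S (hsub (T x) (hscal lam x)) = x)).

Definition spectral_radius_is {X : RHilbert} (T : X -> X) (c : R) : Prop :=
  is_lub (fun r => exists lam, in_spectrum T lam /\ r = Rabs lam) c.

Definition is_eigenvalue {X : RHilbert} (T : X -> X) (lam : R) : Prop :=
  exists x : X, x <> hzero /\ T x = hscal lam x.

Definition ker_I_minus {X : RHilbert} (T : X -> X) (y : X) : Prop := T y = y.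

Definition orth_proj_onto {X : RHilbert} (K : X -> Prop) (P : X -> X) : Prop :=
  is_linear P /\ (forall y, K (P y)) /\
  (forall y k, K k -> hinner (hsub y (P y)) k = 0).

Fixpoint iterseq {X : RHilbert} (T : X -> X) (g : nat -> X) (x0 : X) (n : nat) : X :=
  match n with
  | O => x0
  | S k => hadd (T (iterseq T g x0 k)) (g k)
  end.

Fixpoint sigma (n : nat) (a : nat -> R) : R :=
  match n with
  | O => 0
  | S k => sigma k a + a k
  end.

Definition seq_banach (inL : (nat -> R) -> Prop) (normL : (nat -> R) -> R) : Prop :=
  inL (fun _ => 0) /\
  (forall a b, inL a -> inL b -> inL (fun k => a k + b k)) /\
  (forall c a, inL a -> inL (fun k => c * a k)) /\
  (forall a, inL a -> 0 <= normL a) /\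
  (forall a, inL a -> normL a = 0 -> forall k, a k = 0) /\
  (forall c a, inL a -> normL (fun k => c * a k) = Rabs c * normL a) /\
  (forall a b, inL a -> inL b -> normL (fun k => a k + b k) <= normL a + normL b) /\
  (forall u : nat -> nat -> R, (forall m, inL (u m)) ->
     (forall eps, eps > 0 -> exists N, forall m n, (N <= m)%nat -> (N <= n)%nat ->
        normL (fun k => u m k - u n k) < eps) ->
     exists l, inL l /\ forall eps, eps > 0 -> exists N, forall n, (N <= n)%nat ->
        normL (fun k => u n k - l k) < eps).

Definition monotone_norm (inL : (nat -> R) -> Prop) (normL : (nat -> R) -> R) : Prop :=
  forall a b, inL a -> inL b -> (forall k, Rabs (a k) <= Rabs (b k)) -> normL a <= normL b.

Definition sigmas_bounded (inL : (nat -> R) -> Prop) (normL : (nat -> R) -> R) : Prop :=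
  forall n, exists C, forall a, inL a -> Rabs (sigma n a) <= C * normL a.

Definition sigma_norm_is (inL : (nat -> R) -> Prop) (normL : (nat -> R) -> R)
  (n : nat) (c : R) : Prop :=
  is_lub (fun r => exists a, inL a /\ normL a <= 1 /\ r = Rabs (sigma n a)) c.

(* Main.v *)
Require Import Defs.
From Stdlib Require Import Reals Lra Lia FunctionalExtensionality Classical.
Open Scope R_scope.

Lemma hadd_cancel {X : RHilbert} (a b c : X) : hadd a b = hadd a c -> b = c.
Proof.
  intro H. assert (E: hadd (hopp a) (hadd a b) = hadd (hopp a) (hadd a c)) by (rewrite H; reflexivity).
  rewrite !haddA, (haddC _ (hopp a) a), haddN, !(haddC _ hzero), !hadd0 in E. exact E.
Qed.

Lemma h0add {X : RHilbert} (x : X) : hadd hzero x = x.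
Proof. rewrite haddC; apply hadd0. Qed.

Lemma hscal0 {X : RHilbert} (x : X) : hscal 0 x = hzero.
Proof.
  apply (hadd_cancel (hscal 0 x)). rewrite hadd0, <- hscalDl. f_equal; ring.
Qed.

Lemma hopp_scal {X : RHilbert} (x : X) : hopp x = hscal (-1) x.
Proof.
  apply (hadd_cancel x). rewrite haddN.
  assert (E : hadd x (hscal (-1) x) = hadd (hscal 1 x) (hscal (-1) x)) by (rewrite hscal1; reflexivity).
  rewrite E, <- hscalDl. replace (1 + -1) with 0 by ring. now rewrite hscal0.
Qed.

Lemma hscalz {X : RHilbert} (a : R) : hscal a (@hzero X) = hzero.
Proof.
  apply (hadd_cancel (hscal a hzero)). rewrite hadd0, <- hscalDr, hadd0. reflexivity.
Qed.

Lemma hopp_add {X : RHilbert} (x y : X) : hopp (hadd x y) = hadd (hopp x) (hopp y).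
Proof. rewrite !hopp_scal. apply hscalDr. Qed.

Lemma hopp_opp {X : RHilbert} (x : X) : hopp (hopp x) = x.
Proof. rewrite !hopp_scal, hscalA. replace (-1 * -1) with 1 by ring. apply hscal1. Qed.

Lemma hinnerDr {X : RHilbert} (x y z : X) : hinner x (hadd y z) = hinner x y + hinner x z.
Proof. rewrite hinnerC, hinnerDl, (hinnerC _ y), (hinnerC _ z). reflexivity. Qed.

Lemma hinnerZr {X : RHilbert} a (x y : X) : hinner x (hscal a y) = a * hinner x y.
Proof. rewrite hinnerC, hinnerZl, hinnerC. reflexivity. Qed.

Lemma hinnerNl {X : RHilbert} (x y : X) : hinner (hopp x) y = - hinner x y.
Proof. rewrite hopp_scal, hinnerZl. ring. Qed.

Lemma hinnerNr {X : RHilbert} (x y : X) : hinner x (hopp y) = - hinner x y.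
Proof. rewrite hopp_scal, hinnerZr. ring. Qed.

Lemma hinner0l {X : RHilbert} (x : X) : hinner hzero x = 0.
Proof. rewrite <- (hscal0 x), hinnerZl. ring. Qed.

Lemma hinner_sub {X : RHilbert} (u v : X) :
  hinner (hsub u v) (hsub u v) = hinner u u - 2 * hinner u v + hinner v v.
Proof.
  unfold hsub. rewrite hinnerDl, !hinnerDr, !hinnerNl, !hinnerNr, (hinnerC _ v u). ring.
Qed.

Lemma hinner_add {X : RHilbert} (u v : X) :
  hinner (hadd u v) (hadd u v) = hinner u u + 2 * hinner u v + hinner v v.
Proof.
  rewrite hinnerDl, !hinnerDr, (hinnerC _ v u). ring.
Qed.

Lemma hnorm_ge0 {X : RHilbert} (x : X) : 0 <= hnorm x.
Proof. apply sqrt_pos. Qed.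

Lemma hnorm_sq {X : RHilbert} (x : X) : hnorm x * hnorm x = hinner x x.
Proof. apply sqrt_sqrt, hinner_ge0. Qed.

Lemma hnorm_eq0 {X : RHilbert} (x : X) : hnorm x = 0 -> x = hzero.
Proof. intro H. apply hinner_eq0. rewrite <- hnorm_sq, H. ring. Qed.

Lemma hnorm0 {X : RHilbert} : hnorm (@hzero X) = 0.
Proof. unfold hnorm. rewrite hinner0l. apply sqrt_0. Qed.

Lemma cauchy_schwarz_sq {X : RHilbert} (x y : X) :
  hinner x y * hinner x y <= hinner x x * hinner y y.
Proof.
  destruct (Req_dec (hinner y y) 0) as [H|H].
  - apply hinner_eq0 in H. subst y. rewrite (hinnerC _ x hzero), !hinner0l. lra.
  - pose proof (hinner_ge0 _ y) as Hy. set (t := - hinner x y / hinner y y).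
    pose proof (hinner_ge0 _ (hadd x (hscal t y))) as G.
    rewrite hinner_add, !hinnerZr, hinnerZl in G.
    assert (Hyp : 0 < hinner y y) by lra.
    assert (E : hinner y y * (hinner x x + 2 * (t * hinner x y) + t * (t * hinner y y))
               = hinner x x * hinner y y - hinner x y * hinner x y) by (unfold t; field; lra).
    assert (0 <= hinner y y * (hinner x x + 2 * (t * hinner x y) + t * (t * hinner y y))) by
      (apply Rmult_le_pos; lra).
    lra.
Qed.

Lemma cs {X : RHilbert} (x y : X) : Rabs (hinner x y) <= hnorm x * hnorm y.
Proof.
  rewrite <- (Rabs_pos_eq (hnorm x * hnorm y)) by (apply Rmult_le_pos; apply hnorm_ge0).
  apply Rsqr_le_abs_0. rewrite Rsqr_mult. unfold Rsqr.
  rewrite !hnorm_sq. apply cauchy_schwarz_sq.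
Qed.

Lemma hnorm_triangle {X : RHilbert} (x y : X) : hnorm (hadd x y) <= hnorm x + hnorm y.
Proof.
  apply Rsqr_incr_0_var.
  - unfold Rsqr. rewrite hnorm_sq, hinner_add.
    pose proof (cs x y). pose proof (Rle_abs (hinner x y)).
    rewrite <- (hnorm_sq x), <- (hnorm_sq y). nra.
  - pose proof (hnorm_ge0 x); pose proof (hnorm_ge0 y); lra.
Qed.

Lemma hnorm_scal {X : RHilbert} a (x : X) : hnorm (hscal a x) = Rabs a * hnorm x.
Proof.
  unfold hnorm. rewrite hinnerZl, hinnerZr, <- Rmult_assoc, sqrt_mult.
  - f_equal. replace (a * a) with (Rsqr a) by reflexivity. apply sqrt_Rsqr_abs.
  - nra.
  - apply hinner_ge0.
Qed.

Lemma hnorm_opp {X : RHilbert} (x : X) : hnorm (hopp x) = hnorm x.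
Proof. rewrite hopp_scal, hnorm_scal, Rabs_left by lra. ring. Qed.

Lemma hsub_sym {X : RHilbert} (x y : X) : hnorm (hsub x y) = hnorm (hsub y x).
Proof.
  rewrite <- hnorm_opp. unfold hsub. rewrite hopp_add, hopp_opp, haddC. reflexivity.
Qed.

Lemma hsub_split {X : RHilbert} (x y z : X) : hsub x z = hadd (hsub x y) (hsub y z).
Proof.
  unfold hsub. rewrite <- haddA, (haddA _ (hopp y)), (haddC _ (hopp y) y), haddN, h0add.
  reflexivity.
Qed.

Lemma hnorm_sub_tri {X : RHilbert} (x y z : X) : hnorm (hsub x z) <= hnorm (hsub x y) + hnorm (hsub y z).
Proof. rewrite (hsub_split x y z). apply hnorm_triangle. Qed.

Lemma hsub_diag {X : RHilbert} (x : X) : hsub x x = hzero.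
Proof. apply haddN. Qed.

Lemma hsub_zero {X : RHilbert} (x : X) : hsub x hzero = x.
Proof. unfold hsub. rewrite hopp_scal, hscalz. apply hadd0. Qed.

Lemma hsub_eq0 {X : RHilbert} (x y : X) : hsub x y = hzero -> x = y.
Proof.
  intro H. apply (hadd_cancel (hopp y)). rewrite (haddC _ (hopp y) y), haddN, haddC. exact H.
Qed.

Lemma lin_zero {X : RHilbert} (T : X -> X) : is_linear T -> T hzero = hzero.
Proof. intros [_ H]. rewrite <- (hscal0 hzero), H, !hscal0. reflexivity. Qed.

Lemma lin_opp {X : RHilbert} (T : X -> X) : is_linear T -> forall x, T (hopp x) = hopp (T x).
Proof. intros [_ H] x. rewrite !hopp_scal. apply H. Qed.

Lemma lin_sub {X : RHilbert} (T : X -> X) : is_linear T -> forall x y, T (hsub x y) = hsub (T x) (T y).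
Proof. intros HT x y. unfold hsub. rewrite (proj1 HT), lin_opp; auto. Qed.

Lemma contraction {X : RHilbert} (T : X -> X) : is_linear T -> opnorm_is T 1 ->
  forall x, hnorm (T x) <= hnorm x.
Proof.
  intros HT [Hub _] x.
  destruct (Req_dec (hnorm x) 0) as [H0|H0].
  - apply hnorm_eq0 in H0. subst x. rewrite lin_zero, hnorm0; auto. lra.
  - pose proof (hnorm_ge0 x). set (c := hnorm x) in *.
    assert (Hc : 0 < c) by lra.
    assert (Hn : hnorm (hscal (/ c) x) = 1).
    { rewrite hnorm_scal, Rabs_pos_eq. fold c. field. lra. left; apply Rinv_0_lt_compat; lra. }
    assert (Hb := Hub (hnorm (T (hscal (/ c) x)))).
    assert (hnorm (T (hscal (/ c) x)) <= 1) by (apply Hb; exists (hscal (/c) x); split; [lra|reflexivity]).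
    rewrite (proj2 HT), hnorm_scal, Rabs_pos_eq in H1 by (left; apply Rinv_0_lt_compat; lra).
    apply Rmult_le_reg_l with (/ c). apply Rinv_0_lt_compat; lra.
    replace (/ c * c) with 1 by (field; lra). exact H1.
Qed.

Lemma hadd_swap {X : RHilbert} (p a q b : X) : hadd (hadd p a) (hadd q b) = hadd (hadd p q) (hadd a b).
Proof.
  rewrite <- !haddA. f_equal. rewrite !haddA. f_equal. apply haddC.
Qed.

Lemma hsub_add {X : RHilbert} (p a q b : X) : hsub (hadd p a) (hadd q b) = hadd (hsub p q) (hsub a b).
Proof. unfold hsub. rewrite hopp_add. apply hadd_swap. Qed.

Lemma diff_bound {X : RHilbert} (B : X -> X) (HBlin : is_linear B) (HBnorm : opnorm_is B 1)
  (f x0 : X) (fs : nat -> X) (ds : nat -> R) (Hd : forall n, hnorm (hsub (fs n) f) <= ds n) :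
  forall n, hnorm (hsub (iterseq B fs x0 n) (iterseq B (fun _ => f) x0 n)) <= Defs.sigma n ds.
Proof.
  induction n; simpl.
  - rewrite hsub_diag, hnorm0. lra.
  - rewrite hsub_add, <- lin_sub by auto.
    eapply Rle_trans. apply hnorm_triangle.
    pose proof (contraction B HBlin HBnorm (hsub (iterseq B fs x0 n) (iterseq B (fun _ => f) x0 n))).
    specialize (Hd n). lra.
Qed.

Lemma sigma_scal n c (a : nat -> R) : Defs.sigma n (fun k => c * a k) = c * Defs.sigma n a.
Proof. induction n; simpl. ring. rewrite IHn. ring. Qed.

Lemma sigma_zero n (a : nat -> R) : (forall k, a k = 0) -> Defs.sigma n a = 0.
Proof. intro H. induction n; simpl. ring. rewrite IHn, H. ring. Qed.

Lemma sigma_bound inL normL (HL : seq_banach inL normL) n s (Hs : sigma_norm_is inL normL n s)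
  a (Ha : inL a) : Rabs (Defs.sigma n a) <= s * normL a.
Proof.
  destruct HL as (H0 & _ & Hsc & Hge & Heq & Hnsc & _).
  destruct (Req_dec (normL a) 0) as [Z|Z].
  - rewrite sigma_zero by (apply Heq; auto). rewrite Z, Rabs_R0. lra.
  - pose proof (Hge a Ha). set (c := normL a) in *.
    assert (Hc : 0 < c) by lra.
    destruct Hs as [Hub _].
    assert (Rabs (Defs.sigma n (fun k => / c * a k)) <= s).
    { apply Hub. exists (fun k => / c * a k). split; [apply Hsc; auto|]. split; [|reflexivity].
      rewrite Hnsc by auto. fold c. rewrite Rabs_pos_eq. right; field; lra.
      left; apply Rinv_0_lt_compat; lra. }
    rewrite sigma_scal, Rabs_mult, Rabs_pos_eq in H1 by (left; apply Rinv_0_lt_compat; lra).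
    apply Rmult_le_reg_l with (/ c). apply Rinv_0_lt_compat; lra.
    replace (/ c * (s * c)) with s by (field; lra). exact H1.
Qed.

Lemma sn_nonneg inL normL (HL : seq_banach inL normL) n s (Hs : sigma_norm_is inL normL n s) : 0 <= s.
Proof.
  destruct HL as (H0 & _ & Hsc & Hge & Heq & Hnsc & _).
  destruct Hs as [Hub _]. apply Hub. exists (fun _ => 0). split; auto. split.
  - assert (E : (fun k : nat => 0 * (fun _ : nat => 0) k) = (fun _ => 0))
      by (apply functional_extensionality; intro; ring).
    rewrite <- E, Hnsc by auto. rewrite Rabs_R0. lra.
  - rewrite sigma_zero by auto. rewrite Rabs_R0. reflexivity.
Qed.

Definition pw {X : RHilbert} (B : X -> X) (n : nat) (y : X) : X := Nat.iter n B y.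

Lemma pw_S {X : RHilbert} (B : X -> X) n y : pw B (S n) y = B (pw B n y).
Proof. reflexivity. Qed.

Lemma hnorm_small {X : RHilbert} (v : X) : (forall eps, eps > 0 -> hnorm v < eps) -> v = hzero.
Proof.
  intro H. apply hnorm_eq0. pose proof (hnorm_ge0 v).
  destruct (Req_dec (hnorm v) 0) as [E|E]; auto.
  specialize (H (hnorm v) ltac:(lra)). lra.
Qed.

Lemma hopp_sub {X : RHilbert} (x y : X) : hopp (hsub x y) = hsub y x.
Proof. unfold hsub. rewrite hopp_add, hopp_opp, haddC. reflexivity. Qed.

Lemma hadd_subK {X : RHilbert} (a b : X) : hadd (hsub a b) b = a.
Proof. unfold hsub. rewrite <- haddA, (haddC _ (hopp b) b), haddN, hadd0. reflexivity. Qed.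

Lemma iter_err {X : RHilbert} (B : X -> X) (HBlin : is_linear B) f x0 xs
  (Hxs : xs = hadd (B xs) f) :
  forall n, hsub (iterseq B (fun _ => f) x0 n) xs = pw B n (hsub x0 xs).
Proof.
  induction n; simpl. reflexivity.
  transitivity (hsub (hadd (B (iterseq B (fun _ : nat => f) x0 n)) f) (hadd (B xs) f)).
  { f_equal. exact Hxs. }
  rewrite hsub_add, hsub_diag, hadd0, <- lin_sub, IHn by auto. reflexivity.
Qed.

Lemma pw_inner {X : RHilbert} (B : X -> X) (HBsa : self_adjoint B) (y : X) :
  forall m n, hinner (pw B m y) (pw B n y) = hinner y (pw B (m + n) y).
Proof.
  induction m; intro n. reflexivity.
  rewrite pw_S, HBsa, <- pw_S, IHm. rewrite Nat.add_succ_r. reflexivity.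
Qed.

Lemma pw_orth {X : RHilbert} (B : X -> X) (HBsa : self_adjoint B) (y k : X)
  (Hk : B k = k) (Hy : hinner y k = 0) : forall n, hinner (pw B n y) k = 0.
Proof. induction n. exact Hy. rewrite pw_S, HBsa, Hk. exact IHn. Qed.

Lemma pw_dec {X : RHilbert} (B : X -> X) (HBlin : is_linear B) (HBnorm : opnorm_is B 1) y :
  forall n k, (n <= k)%nat -> hnorm (pw B k y) <= hnorm (pw B n y).
Proof.
  intros n k H. induction H. lra.
  rewrite pw_S. eapply Rle_trans. apply contraction; auto. exact IHle.
Qed.

Lemma pw_conv {X : RHilbert} (B : X -> X) (HBlin : is_linear B) (HBsa : self_adjoint B)
  (HBnorm : opnorm_is B 1) (HBm1 : ~ is_eigenvalue B (-1)) (y : X)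
  (Hy : forall k, B k = k -> hinner y k = 0) :
  forall eps, eps > 0 -> exists N, forall n, (N <= n)%nat -> hnorm (pw B n y) < eps.
Proof.
  set (e := fun k => hinner (pw B k y) (pw B k y)).
  assert (Hdec : Un_decreasing e).
  { intro k. unfold e. rewrite <- !hnorm_sq.
    pose proof (pw_dec B HBlin HBnorm y k (S k) ltac:(lia)).
    pose proof (hnorm_ge0 (pw B (S k) y)). nra. }
  assert (Hlb : has_lb e).
  { exists 0. intros r [i ->]. unfold opp_seq, e. pose proof (hinner_ge0 _ (pw B i y)). lra. }
  destruct (decreasing_cv e Hdec Hlb) as [L HL].
  set (u := fun n => pw B (n + n) y).
  assert (Hcau : forall eps, eps > 0 -> exists N, forall m n, (N <= m)%nat -> (N <= n)%nat ->
        sqrt (hinner (hadd (u m) (hopp (u n))) (hadd (u m) (hopp (u n)))) < eps).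
  { intros eps Heps. destruct (HL (eps * eps / 4)) as [N HN].
    { apply Rmult_gt_0_compat; [apply Rmult_gt_0_compat|]; lra. }
    exists N. intros m n Hm Hn.
    change (hadd (u m) (hopp (u n))) with (hsub (u m) (u n)).
    pose proof (hinner_ge0 _ (hsub (u m) (u n))) as G.
    assert (ES : hinner (hsub (u m) (u n)) (hsub (u m) (u n)) = e (m + m)%nat - 2 * e (m + n)%nat + e (n + n)%nat).
    { rewrite hinner_sub. unfold u, e. rewrite (pw_inner B HBsa y (m + m) (n + n)).
      rewrite (pw_inner B HBsa y (m + n) (m + n)).
      replace (m + n + (m + n))%nat with (m + m + (n + n))%nat by lia. reflexivity. }
    rewrite ES in *.
    pose proof (HN (m + m)%nat ltac:(lia)). pose proof (HN (n + n)%nat ltac:(lia)).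
    pose proof (HN (m + n)%nat ltac:(lia)). unfold Rdist in *.
    rewrite <- (sqrt_square eps) by lra. apply sqrt_lt_1_alt. split. exact G.
    apply Rabs_def2 in H, H0, H1. lra. }
  destruct (hcomplete X u Hcau) as [z Hz].
  change (forall eps, eps > 0 -> exists N, forall n, (N <= n)%nat -> hnorm (hsub (u n) z) < eps) in Hz.
  assert (HBBz : z = B (B z)).
  { apply hsub_eq0, hnorm_small. intros eps Heps.
    destruct (Hz (eps / 2) ltac:(lra)) as [N HN].
    eapply Rle_lt_trans. apply (hnorm_sub_tri _ (u (S N))).
    assert (Hu : u (S N) = B (B (u N))).
    { unfold u. replace (S N + S N)%nat with (S (S (N + N))) by lia. reflexivity. }
    rewrite Hu, <- !lin_sub by auto.
    pose proof (contraction B HBlin HBnorm (B (hsub (u N) z))).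
    pose proof (contraction B HBlin HBnorm (hsub (u N) z)).
    pose proof (HN N (le_n N)). pose proof (HN (S N) (le_S _ _ (le_n N))).
    rewrite Hu in H2. rewrite hsub_sym in H2. lra. }
  assert (HBz : B z = z).
  { apply hsub_eq0. destruct (classic (hsub (B z) z = hzero)) as [E|E]; auto.
    exfalso. apply HBm1. exists (hsub (B z) z). split; auto.
    rewrite lin_sub, <- HBBz, <- hopp_scal, hopp_sub by auto. reflexivity. }
  assert (Hz0 : z = hzero).
  { apply hnorm_small. intros eps Heps.
    destruct (Hz eps Heps) as [N HN]. specialize (HN N (le_n N)).
    rewrite hsub_sym in HN.
    assert (Horth : hinner (u N) z = 0) by (apply pw_orth; auto).
    assert (Hzz : hnorm z * hnorm z <= hnorm (hsub z (u N)) * hnorm z).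
    { rewrite hnorm_sq. rewrite <- (hadd_subK z (u N)) at 1.
      rewrite hinnerDl, Horth, Rplus_0_r. eapply Rle_trans. apply Rle_abs. apply cs. }
    pose proof (hnorm_ge0 z). pose proof (hnorm_ge0 (hsub z (u N))).
    destruct (Req_dec (hnorm z) 0) as [Z|Z]. lra.
    assert (hnorm z <= hnorm (hsub z (u N))).
    { apply Rmult_le_reg_r with (hnorm z). lra. exact Hzz. }
    lra. }
  subst z. intros eps Heps. destruct (Hz eps Heps) as [N HN].
  exists (N + N)%nat. intros n Hn.
  specialize (HN N (le_n N)). rewrite hsub_zero in HN.
  eapply Rle_lt_trans. apply (pw_dec B HBlin HBnorm y (N + N) n Hn). exact HN.
Qed.

Theorem theorem1p7
  (X : RHilbert) (B : X -> X)
  (HBlin : is_linear B) (HBbd : is_bounded B) (HBsa : self_adjoint B)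
  (HBnorm : opnorm_is B 1) (HBrho : spectral_radius_is B 1)
  (HBm1 : ~ is_eigenvalue B (-1))
  (f : X) (Hsolv : exists x : X, x = hadd (B x) f)
  (P : X -> X) (HP : orth_proj_onto (ker_I_minus B) P)
  (x0 xs : X) (Hxs : xs = hadd (B xs) f) (HPxs : P xs = P x0)
  (inL : (nat -> R) -> Prop) (normL : (nat -> R) -> R)
  (HL : seq_banach inL normL) (HLmon : monotone_norm inL normL)
  (HLsig : sigmas_bounded inL normL)
  (sn : nat -> R) (Hsn : forall n, sigma_norm_is inL normL n (sn n)) :
  (forall (fs : nat -> X) (ds : nat -> R),
     (forall n, 0 <= ds n) -> inL ds ->
     (forall n, hnorm (hsub (fs n) f) <= ds n) ->
     forall n,
       hnorm (hsub (iterseq B fs x0 n) xs)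
       <= hnorm (hsub (iterseq B (fun _ => f) x0 n) xs) + sn n * normL ds)
  /\
  (forall eps, eps > 0 ->
     exists N : nat, forall Nm Np : nat, (N <= Nm)%nat -> (Nm < Np)%nat ->
       exists eta, eta > 0 /\
         forall (fs : nat -> X) (ds : nat -> R),
           (forall n, 0 <= ds n) -> inL ds ->
           (forall n, hnorm (hsub (fs n) f) <= ds n) ->
           normL ds < eta ->
           forall n, (Nm <= n)%nat -> (n <= Np)%nat ->
             hnorm (hsub (iterseq B fs x0 n) xs) < eps).
Proof.
  destruct HP as (HPlin & HPK & HPorth).
  assert (P1 : forall (fs : nat -> X) (ds : nat -> R),
     (forall n, 0 <= ds n) -> inL ds ->
     (forall n, hnorm (hsub (fs n) f) <= ds n) ->
     forall n,
       hnorm (hsub (iterseq B fs x0 n) xs)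
       <= hnorm (hsub (iterseq B (fun _ => f) x0 n) xs) + sn n * normL ds).
  { intros fs ds Hds0 HdsL Hfs n.
    eapply Rle_trans. apply (hnorm_sub_tri _ (iterseq B (fun _ => f) x0 n)).
    pose proof (diff_bound B HBlin HBnorm f x0 fs ds Hfs n).
    pose proof (sigma_bound inL normL HL n (sn n) (Hsn n) ds HdsL).
    pose proof (Rle_abs (Defs.sigma n ds)). lra. }
  split; [exact P1|].
  set (y := hsub x0 xs).
  assert (Hy : forall k, B k = k -> hinner y k = 0).
  { intros k Hk. specialize (HPorth y k Hk).
    assert (E : P y = hzero) by (unfold y; rewrite lin_sub, HPxs, hsub_diag by auto; reflexivity).
    rewrite E, hsub_zero in HPorth. exact HPorth. }
  intros eps Heps.
  destruct (pw_conv B HBlin HBsa HBnorm HBm1 y Hy (eps / 2) ltac:(lra)) as [N HN].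
  exists N. intros Nm Np HNm HNp.
  assert (HM : exists M, 0 < M /\ forall n, (n <= Np)%nat -> sn n <= M).
  { clear -HL Hsn. induction Np.
    - exists (Rabs (sn 0%nat) + 1). split. pose proof (Rabs_pos (sn 0%nat)); lra.
      intros n Hn. inversion Hn. pose proof (Rle_abs (sn 0%nat)); lra.
    - destruct IHNp as [M [HM HMb]]. exists (M + Rabs (sn (S Np))). split.
      pose proof (Rabs_pos (sn (S Np))); lra.
      intros n Hn. inversion Hn. pose proof (Rle_abs (sn (S Np))); pose proof (Rabs_pos (sn (S Np))). subst; lra.
      pose proof (HMb n H0). pose proof (Rabs_pos (sn (S Np))). lra. }
  destruct HM as [M [HM HMb]].
  exists (eps / (2 * M)). split.
  { apply Rdiv_lt_0_compat; lra. }
  intros fs ds Hds0 HdsL Hfs Hsmall n Hn1 Hn2.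
  pose proof (P1 fs ds Hds0 HdsL Hfs n) as Q.
  rewrite (iter_err B HBlin f x0 xs Hxs n) in Q. fold y in Q.
  pose proof (HN n ltac:(lia)).
  pose proof (HMb n Hn2).
  pose proof (sn_nonneg inL normL HL n (sn n) (Hsn n)).
  destruct HL as (_ & _ & _ & Hge & _).
  pose proof (Hge ds HdsL).
  assert (sn n * normL ds <= M * normL ds) by (apply Rmult_le_compat_r; lra).
  assert (M * normL ds < M * (eps / (2 * M))) by (apply Rmult_lt_compat_l; lra).
  replace (M * (eps / (2 * M))) with (eps / 2) in H4 by (field; lra).
  lra.
Qed.
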